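(* A distributional factorization satisfying the DIGM principle does not guarantee the RIGM principle. Precisely: there exist a number of agents $N$, finite action sets, a distributional factorization $\Phi$, per-agent return distributions $[Z_i(\tau_i,u_i)]_{i=1}^N$ and a risk metric $\psi_\alpha$ (which can be taken to be a Value-at-Risk metric $\mathrm{VaR}_\alpha$) such that $[Z_i]_{i=1}^N$ satisfy DIGM for $Z_{jt}(\boldsymbol\tau,\boldsymbol u)=\Phi(Z_1(\tau_1,u_1),\dots,Z_N(\tau_N,u_N))$, but $[Z_i]_{i=1}^N$ do not satisfy RIGM for $Z_{jt}$ with risk metric $\psi_\alpha$.
   Context: There are $N$ agents; agent $i$ has observation history $\tau_i$ and a finite action set $U_i$; $\boldsymbol\tau=(\tau_1,\dots,\tau_N)$, $\boldsymbol u=(u_1,\dots,u_N)$. Return distributions are real random variables. For a real random variable $Z$ with CDF $F_Z$, its quantile function is $\theta_Z(\omega)=\inf\{z\in\mathbb{R}:\omega\le F_Z(z)\}$, $\omega\in(0,1]$, and $\mathrm{VaR}_\alpha(Z)=\theta_Z(\alpha)$. RIGM: given a risk metric $\psi_\alpha$, per-agent return distributions $[Z_i(\tau_i,u_i)]$ satisfy RIGM for a joint return distribution $Z_{jt}(\boldsymbol\tau,\boldsymbol u)$ with $\psi_\alpha$ under $\boldsymbol\tau$ if $\arg\max_{\boldsymbol u}\psi_\alpha[Z_{jt}(\boldsymbol\tau,\boldsymbol u)]=(\arg\max_{u_1}\psi_\alpha[Z_1(\tau_1,u_1)],\dots,\arg\max_{u_N}\psi_\alpha[Z_N(\tau_N,u_N)])$.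 DIGM is RIGM with $\psi_\alpha$ replaced by the expectation $\mathbb{E}$. Argmax sets are assumed to be singletons (ties broken by smallest index). *)

(* Defs.v *)
From HB Require Import structures.
From mathcomp Require Import all_boot all_order all_algebra.
From mathcomp Require Import all_classical all_reals all_analysis.
Set Implicit Arguments. Unset Strict Implicit. Unset Printing Implicit Defensive.
Import Order.TTheory GRing.Theory Num.Theory.
Local Open Scope classical_set_scope.
Local Open Scope ring_scope.

Section Defs.
Context {d : measure_display} {Omega : measurableType d} {R : realType}.
Variable P : probability Omega R.

Definition cdf (Z : {RV P >-> R}) (z : R) : R := fine (P [set w | Z w <= z]).

Definition quantile (Z : {RV P >-> R}) (om : R) : R :=
  inf [set z : R | om <= cdf Z z].

Definition VaR (alpha : R) (Z : {RV P >-> R}) : R := quantile Z alpha.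

Definition metric_VaR (alpha : R) : {RV P >-> R} -> \bar R :=
  fun Z => (VaR alpha Z)%:E.
Definition metric_E : {RV P >-> R} -> \bar R := fun Z => ('E_P[Z])%E.

End Defs.

Definition argmax {A : Type} {R : realType} (f : A -> \bar R) : set A :=
  [set a | forall b, (f b <= f a)%E].

(* Individual-Global-Max consistency for a metric psi, under a fixed joint
   history tau: agents i : 'I_N, actions of agent i : 'I_(m i).+1,
   joint actions : forall i, 'I_(m i).+1. *)
Definition IGM_under {d} {Omega : measurableType d} {R : realType}
  (P : probability Omega R) (N : nat) (m : 'I_N -> nat)
  (H : 'I_N -> Type) (tau : forall i, H i)
  (psi : {RV P >-> R} -> \bar R)
  (Z : forall i : 'I_N, H i -> 'I_(m i).+1 -> {RV P >-> R})
  (Zjt : (forall i, H i) -> (forall i : 'I_N, 'I_(m i).+1) -> {RV P >-> R}) : Prop :=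
  argmax (fun u => psi (Zjt tau u)) =
  [set u | forall i : 'I_N, argmax (fun ui => psi (Z i (tau i) ui)) (u i)].

Definition argmax_singleton {A : Type} {R : realType} (f : A -> \bar R) : Prop :=
  exists a, argmax f = [set a].
Arguments metric_E {d Omega R} P _.
Arguments metric_VaR {d Omega R} P alpha _.

(* Main.v *)
Require Import Defs.
From HB Require Import structures.
From mathcomp Require Import all_boot all_order all_algebra.
From mathcomp Require Import all_classical all_reals all_analysis.
From mathcomp Require Import ring lra.
Import Order.TTheory GRing.Theory Num.Theory.
Local Open Scope classical_set_scope.
Local Open Scope ring_scope.

Section Example.
Variable R : realType.

Definition PP : probability bool R := bernoulli_prob (2^-1 : R).
Definition Xf (b : bool) : R := if b then 10 else 0.
Lemma mXf : measurable_fun setT Xf. Proof. by []. Qed.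
HB.instance Definition _ := isMeasurableFun.Build _ _ _ _ Xf mXf.

Lemma p01 : 0 <= (2^-1 : R) <= 1.
Proof. by rewrite invr_ge0 ler0n /= invf_le1 // ler1n. Qed.

Lemma PP_false : PP [set false] = (2^-1 : R)%:E.
Proof.
change (bernoulli_prob (2^-1 : R) [set false] = (2^-1 : R)%:E).
rewrite bernoulli_probE; last exact: p01.
rewrite !diracE memNset // mem_set //= mule0 add0e mule1.
by congr EFin; rewrite /unstable.onem; field.
Qed.

Lemma integ (g : {RV PP >-> R}) : PP.-integrable setT (EFin \o g).
Proof.
apply/integrableP; split; first by [].
rewrite /PP integral_bernoulli_prob; last 2 first.
- exact: p01.
- by move=> x; exact: abse_ge0.
by rewrite /= -!EFinM -EFinD ltry.
Qed.

Lemma E_X : ('E_PP[(Xf : {RV PP >-> R})])%E = 5%:E.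
Proof.
rewrite unlock /PP integral_bernoulli_prob; last 2 first.
- exact: p01.
- by move=> x; rewrite lee_fin /Xf; case: x.
rewrite /Xf /= -!EFinM -EFinD; congr EFin; rewrite /unstable.onem; lra.
Qed.

Lemma VaR_of (Z : {RV PP >-> R}) c :
  (forall z, (2^-1 <= Defs.cdf Z z) = (c <= z)) -> Defs.VaR 2^-1 Z = c.
Proof.
move=> h; rewrite /Defs.VaR /Defs.quantile.
have -> : [set z | 2^-1 <= Defs.cdf Z z] = [set` Interval (BSide true c) +oo%O].
  by apply/seteqP; split => z /=; rewrite in_itv /= andbT h.
by rewrite inf_itv.
Qed.

Lemma setT_true : [set _ : bool | true] = setT.
Proof. by apply/seteqP; split. Qed.
Lemma set0_false : [set _ : bool | false] = set0.
Proof. by apply/seteqP; split. Qed.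

Lemma VaR_cst c : Defs.VaR 2^-1 (cst c : {RV PP >-> R}) = c.
Proof.
apply: VaR_of => z; rewrite /Defs.cdf /=.
have [cz|cz] := leP c z.
  by rewrite setT_true probability_setT /= invf_le1 // ler1n.
by rewrite set0_false measure0 /= leNgt invr_gt0 ltr0n.
Qed.

Lemma VaR_X : Defs.VaR 2^-1 (Xf : {RV PP >-> R}) = 0.
Proof.
apply: VaR_of => z; rewrite /Defs.cdf /=.
have [z0|z0] := leP 0 z.
  have [z10|z10] := leP 10 z.
    have -> : [set w : bool | Xf w <= z] = setT.
      by apply/seteqP; split => // -[] _ /=.
    by rewrite probability_setT /= invf_le1 // ler1n.
  have -> : [set w : bool | Xf w <= z] = [set false].
    apply/seteqP; split => -[] /=; [by rewrite leNgt z10 | by [] | by [] | by move=> _].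
  have PF : bernoulli_prob (2^-1 : R) [set false] = (2^-1 : R)%:E := PP_false.
  by rewrite PF /= lexx.
have -> : [set w : bool | Xf w <= z] = set0.
  apply/seteqP; split => // -[] /=; rewrite leNgt.
    by rewrite (lt_trans z0).
  by rewrite z0.
by rewrite measure0 /= leNgt invr_gt0 ltr0n.
Qed.

Definition Zs (i : 'I_1) (_ : unit) (ui : 'I_2) : {RV PP >-> R} :=
  cst ((ui : nat)%:R).
Definition Phi (f : 'I_1 -> {RV PP >-> R}) : {RV PP >-> R} :=
  if f ord0 true == 1 then (Xf : {RV PP >-> R}) else cst 1.
Definition J (u : forall i : 'I_1, 'I_2) : bool := (val (u ord0) == 1)%N.

Lemma PhiE u : Phi (fun i => Zs i tt (u i)) = if J u then (Xf : {RV PP >-> R}) else cst 1.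
Proof. by rewrite /Phi /Zs /= /J pnatr_eq1. Qed.

Lemma joint_E u : metric_E PP (Phi (fun i => Zs i tt (u i))) =
  (if J u then 5 else 1)%:E.
Proof.
rewrite /metric_E PhiE; case: (J u); first exact: E_X.
exact: expectation_cst.
Qed.

Lemma joint_VaR u : metric_VaR PP 2^-1 (Phi (fun i => Zs i tt (u i))) =
  (if J u then 0 else 1)%:E.
Proof.
rewrite /metric_VaR PhiE; case: (J u); first by rewrite VaR_X.
by rewrite VaR_cst.
Qed.

Lemma uE u : J u -> u = fun _ => ord_max.
Proof.
move=> /eqP h; apply/funext => i; rewrite (ord1 i); exact/val_inj.
Qed.

Lemma uE' u : ~~ J u -> u = fun _ => ord0.
Proof.
move=> h; apply/funext => i; rewrite (ord1 i); apply/val_inj => /=.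
move: h; rewrite /J; case: (u ord0) => -[|[|n]] //.
Qed.

Lemma argmax_J (a b : R) : b < a ->
  argmax (fun u => (if J u then a else b)%:E) = [set fun _ => ord_max].
Proof.
move=> ba; apply/seteqP; split => u /=.
  move=> /(_ (fun _ => ord_max)) /=; rewrite /J /=.
  case Ju: (val (u ord0) == 1)%N; first by move=> _; apply: uE.
  by rewrite lee_fin leNgt ba.
move=> ->{u} v; rewrite /J /=; case: ifP => _; rewrite lee_fin //.
exact: ltW.
Qed.

Lemma argmax_nJ (a b : R) : a < b ->
  argmax (fun u => (if J u then a else b)%:E) = [set fun _ => ord0].
Proof.
move=> ab; apply/seteqP; split => u /=.
  move=> /(_ (fun _ => ord0)) /=; rewrite /J /=.
  case Ju: (val (u ord0) == 1)%N; last by move=> _; apply: uE'; rewrite /J Ju.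
  by rewrite lee_fin leNgt ab.
move=> ->{u} v; rewrite /J /=; case: ifP => _; rewrite lee_fin //.
exact: ltW.
Qed.

Lemma argmax_ind : argmax (fun ui : 'I_2 => (((ui : nat)%:R : R))%:E) = [set ord_max].
Proof.
apply/seteqP; split => u /=.
  move=> /(_ ord_max); rewrite lee_fin ler_nat => h.
  by apply/val_inj => /=; move: h; case: u => -[|[|n]].
move=> -> v; rewrite lee_fin ler_nat /=; case: v => -[|[|n]] //.
Qed.

Lemma argE : argmax (fun u : forall i : 'I_1, 'I_2 =>
  metric_E PP (Phi (fun i => Zs i tt (u i)))) = [set fun _ => ord_max].
Proof.
rewrite (_ : (fun u => _) = (fun u => (if J u then 5 else 1)%:E)).
  by apply: argmax_J; lra.
by apply/funext => u; rewrite joint_E.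
Qed.

Lemma argV : argmax (fun u : forall i : 'I_1, 'I_2 =>
  metric_VaR PP 2^-1 (Phi (fun i => Zs i tt (u i)))) = [set fun _ => ord0].
Proof.
rewrite (_ : (fun u => _) = (fun u => (if J u then 0 else 1)%:E)).
  by apply: argmax_nJ; lra.
by apply/funext => u; rewrite joint_VaR.
Qed.

Lemma argiE i : argmax (fun ui : 'I_2 => metric_E PP (Zs i tt ui)) = [set ord_max].
Proof.
rewrite -argmax_ind; congr argmax; apply/funext => ui.
by rewrite /metric_E /Zs expectation_cst.
Qed.

Lemma argiV i : argmax (fun ui : 'I_2 => metric_VaR PP 2^-1 (Zs i tt ui)) = [set ord_max].
Proof.
rewrite -argmax_ind; congr argmax; apply/funext => ui.
by rewrite /metric_VaR /Zs VaR_cst.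
Qed.

Lemma rhs_set (g : 'I_1 -> 'I_2 -> \bar R) :
  (forall i, argmax (g i) = [set ord_max]) ->
  [set u : forall i : 'I_1, 'I_2 | forall i, argmax (g i) (u i)] = [set fun _ => ord_max].
Proof.
move=> h; apply/seteqP; split => u /=.
  move=> H; apply/funext => i; have := H i; by rewrite h.
by move=> -> i; rewrite h.
Qed.

End Example.

Theorem theorem2 (R : realType) :
  exists (d : measure_display) (Omega : measurableType d) (P : probability Omega R)
    (N : nat) (m : 'I_N -> nat) (H : 'I_N -> Type) (tau : forall i, H i)
    (Phi : ('I_N -> {RV P >-> R}) -> {RV P >-> R})
    (Z : forall i : 'I_N, H i -> 'I_(m i).+1 -> {RV P >-> R})
    (alpha : R),
    let Zjt := fun (t : forall i, H i) (u : forall i : 'I_N, 'I_(m i).+1) =>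
                 Phi (fun i => Z i (t i) (u i)) in
    0 < alpha <= 1 /\
        (forall i (ui : 'I_(m i).+1), P.-integrable setT (EFin \o Z i (tau i) ui)) /\
        (forall u : forall i : 'I_N, 'I_(m i).+1, P.-integrable setT (EFin \o Zjt tau u)) /\
        (* standing assumption: all relevant argmax sets are singletons *)
        (forall i : 'I_N, argmax_singleton (fun ui => metric_E P (Z i (tau i) ui)) /\
                          argmax_singleton (fun ui => metric_VaR P alpha (Z i (tau i) ui))) /\
        (argmax_singleton (fun u => metric_E P (Zjt tau u)) /\
        argmax_singleton (fun u => metric_VaR P alpha (Zjt tau u))) /\
        (* DIGM holds *)
        IGM_under tau (metric_E P) Z Zjt /\
        (* RIGM fails for psi_alpha = VaR_alpha *)
        ~ IGM_under tau (metric_VaR P alpha) Z Zjt.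
Proof.
eexists; exists bool, (PP R), 1%N, (fun _ => 1%N), (fun _ => unit), (fun _ => tt),
  (@Phi R), (@Zs R), 2^-1.
move=> Zjt; rewrite /Zjt.
split; first by rewrite invr_gt0 ltr0n /= invf_le1 // ler1n.
split; first by move=> *; exact: integ.
split; first by move=> *; exact: integ.
split.
  move=> i; split; [exists ord_max; exact: argiE | exists ord_max; exact: argiV].
split; first by split; [exists (fun _ => ord_max); exact: argE | exists (fun _ => ord0); exact: argV].
split.
  rewrite /IGM_under argE; apply/esym; apply: rhs_set => i; exact: argiE.
rewrite /IGM_under argV (@rhs_set R _ (@argiV R)) => /seteqP [] /(_ (fun _ => ord0)) H _.
by have /(congr1 (fun f => val (f ord0))) := H erefl.
Qed.
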